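(* In the brand-effects model, fix $k$ with $0 \le k < s$, fix the ads placed in positions $1,\dots,k$, fix the eCPM bids of the remaining (not yet placed) non-brand advertisers (at least one), and fix the eCPM bids of all remaining brand advertisers except the one with the highest eCPM bid among the remaining brand advertisers, whose eCPM bid $v_b$ is allowed to vary (over values at least as large as the other remaining brand eCPM bids). Then exactly one of the following holds: it is optimal to show a brand ad in position $k+1$ for no value of $v_b$; it is optimal for every value of $v_b$; or there is a threshold $t$ such that it is optimal to show a brand ad in position $k+1$ if and only if $v_b \ge t$.
   Context: Brand-effects model: there are $s$ positions and a set of advertisers, each either a brand advertiser or a non-brand advertiser; advertiser $i$ has quality score $q_i \ge 0$ and bid $b_i \ge 0$, and its eCPM bid is $b_i q_i$. Each position $k$ has two quality scores $\beta_k$ and $\eta_k$, both non-increasing in $k$, normalized so $\beta_1=\eta_1=1$. A brand (resp. non-brand) advertiser with quality $q$ shown in position $k$ is clicked with probability $\beta_k q$ (resp. $\eta_k q$). An allocation places distinct advertisers in the positions; its total expected welfare is $\sum_j b_{(j)} p_{(j)}$, where $b_{(j)}$ and $p_{(j)}$ are the bid and click probability of the ad in position $j$. ''It is optimal to show a brand ad in position $k+1$'' means that the maximum total expected welfare over allocations that agree with the fixed ads in positions $1,\dots,k$ and have a brand ad in position $k+1$ is at least the maximum over such allocations having a non-brand ad in position $k+1$. *)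

(* Defs.v *)
From HB Require Import structures.
From mathcomp Require Import all_boot all_order all_algebra.
From mathcomp Require Import reals.
Set Implicit Arguments. Unset Strict Implicit. Unset Printing Implicit Defensive.
Import Order.TTheory GRing.Theory Num.Theory.
Local Open Scope ring_scope.

(* Positions are 1..s; an allocation is a finite function
   al : {ffun 'I_s -> option A}, where index i : 'I_s stands for position
   i+1 and None means the position is left empty.  Position quality scores
   beta, eta : nat -> R are indexed by the (1-based) position number. *)

Section BrandModel.
Variables (R : realType) (A : finType) (s : nat).
Implicit Types (al : {ffun 'I_s -> option A}).

Definition valid_alloc al : Prop :=
  forall (i j : 'I_s) (a : A), al i = Some a -> al j = Some a -> i = j.

Definition agrees (k : nat) (pre al : {ffun 'I_s -> option A}) : Prop :=
  forall i : 'I_s, (i < k)%N -> al i = pre i.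

Definition remaining (k : nat) (pre : {ffun 'I_s -> option A}) (a : A) : Prop :=
  forall i : 'I_s, (i < k)%N -> pre i <> Some a.

Definition click_prob (brand : pred A) (beta eta : nat -> R) (q : A -> R)
  (a : A) (j : nat) : R :=
  (if brand a then beta j else eta j) * q a.

Definition welfare (brand : pred A) (beta eta : nat -> R) (b q : A -> R) al : R :=
  \sum_(i < s) match al i with
               | Some a => b a * click_prob brand beta eta q a i.+1
               | None => 0
               end.

Definition brand_at (brand : pred A) (k : nat) al : Prop :=
  exists i : 'I_s, val i = k /\ exists a, al i = Some a /\ brand a.
Definition nonbrand_at (brand : pred A) (k : nat) al : Prop :=
  exists i : 'I_s, val i = k /\ exists a, al i = Some a /\ ~~ brand a.

(* "it is optimal to show a brand ad in position k+1": the maximum welfare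
   over valid allocations agreeing with [pre] on positions 1..k with a brand
   ad in position k+1 is at least the maximum over those with a non-brand
   ad in position k+1 (the maximum of the first, finite, family is attained
   by some allocation [al]). *)
Definition brand_optimal (brand : pred A) (beta eta : nat -> R) (b q : A -> R)
  (k : nat) (pre : {ffun 'I_s -> option A}) : Prop :=
  exists al, [/\ valid_alloc al, agrees k pre al, brand_at brand k al &
    forall al', valid_alloc al' -> agrees k pre al' -> nonbrand_at brand k al' ->
      welfare brand beta eta b q al' <= welfare brand beta eta b q al].

End BrandModel.

(* Main.v *)
Require Import Defs.
From HB Require Import structures.
From mathcomp Require Import all_boot all_order all_algebra.
From mathcomp Require Import reals ring lra.
From Stdlib Require Import Classical.
Set Implicit Arguments. Unset Strict Implicit.
Import Order.TTheory GRing.Theory Num.Theory.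
Local Open Scope ring_scope.

Section Ray.
Variable R : realType.
Definition ray (S : R -> Prop) :=
  (forall v, ~ S v) \/ (forall v, S v) \/ exists t, forall v, S v <-> t <= v.

Lemma ray_ext (S S' : R -> Prop) : (forall v, S v <-> S' v) -> ray S -> ray S'.
Proof.
move=> e [h|[h|[t h]]]; [left|right;left|right;right].
- by move=> v /e; apply: h.
- by move=> v; apply/e.
- by exists t => v; rewrite -e.
Qed.

Lemma ray_const (P : Prop) : ray (fun _ => P).
Proof. case: (classic P) => p; [by right; left|by left]. Qed.

Lemma ray_and S1 S2 : ray S1 -> ray S2 -> ray (fun v => S1 v /\ S2 v).
Proof.
move=> [h1|[h1|[t1 h1]]].
- by move=> _; left=> v [/h1].
- move=> h2; apply: ray_ext h2 => v; split=> [?|[]] //; split => //; exact: h1.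
move=> [h2|[h2|[t2 h2]]].
- by left=> v [_ /h2].
- by right; right; exists t1 => v; split=> [[/h1]|/h1] //.
right; right; exists (Order.max t1 t2) => v; rewrite ge_max h1 h2.
by split=> [[-> ->]|/andP].
Qed.

Lemma ray_or S1 S2 : ray S1 -> ray S2 -> ray (fun v => S1 v \/ S2 v).
Proof.
move=> [h1|[h1|[t1 h1]]].
- move=> h2; apply: ray_ext h2 => v; split=> [?|[/h1 []|//]]; by right.
- by move=> _; right; left => v; left.
move=> [h2|[h2|[t2 h2]]].
- by right; right; exists t1 => v; split=> [[/h1|/h2]|/h1] //; left.
- by right; left => v; right.
right; right; exists (Order.min t1 t2) => v; rewrite ge_min h1 h2.
by split=> [[->|->]|/orP] //; rewrite orbT.
Qed.

Lemma ray_imp (P : Prop) S : (P -> ray S) -> ray (fun v => P -> S v).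
Proof.
case: (classic P) => p h.
  by apply: ray_ext (h p) => v; split => // H; apply: H.
by right; left.
Qed.

Lemma ray_andP (P : Prop) S : (P -> ray S) -> ray (fun v => P /\ S v).
Proof.
case: (classic P) => p h.
  by apply: ray_ext (h p) => v; split => // -[].
by left => v [].
Qed.

Lemma ray_lin (a b c d : R) : c <= d -> ray (fun v => a + v * c <= b + v * d).
Proof.
rewrite le_eqVlt => /orP [/eqP <-|cd].
  apply: (@ray_ext (fun _ => a <= b)); last exact: ray_const.
  by move=> v; rewrite lerD2r.
right; right; exists ((a - b) / (d - c)) => v.
rewrite ler_pdivrMr ?subr_gt0 // mulrBr.
by split => h; lra.
Qed.

Lemma ray_all (T : eqType) (l : seq T) (S : T -> R -> Prop) :
  (forall x, ray (S x)) -> ray (fun v => forall x, x \in l -> S x v).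
Proof.
move=> h; elim: l => [|y l IH].
  by right; left.
apply: ray_ext (ray_and (h y) IH) => v; split.
  by move=> [h1 h2] x; rewrite inE => /orP [/eqP ->|/h2].
by move=> H; split=> [|x xl]; apply: H; rewrite inE ?eqxx ?xl ?orbT.
Qed.

Lemma ray_ex (T : eqType) (l : seq T) (S : T -> R -> Prop) :
  (forall x, ray (S x)) -> ray (fun v => exists x, x \in l /\ S x v).
Proof.
move=> h; elim: l => [|y l IH].
  by left => v [x []].
apply: ray_ext (ray_or (h y) IH) => v; split.
  move=> [H|[x [xl H]]]; first by exists y; rewrite inE eqxx.
  by exists x; rewrite inE xl orbT.
move=> [x []]; rewrite inE => /orP [/eqP -> H|xl H]; first by left.
by right; exists x.
Qed.
End Ray.

Section Main.
Variables (R : realType) (A : finType) (s k : nat)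
  (beta eta : nat -> R) (brand : pred A) (b q : A -> R)
  (pre : {ffun 'I_s -> option A}) (a0 : A).
Implicit Types (al : {ffun 'I_s -> option A}).
Hypotheses (hks : (k < s)%N)
  (hmono : forall i j : nat, (1 <= i)%N -> (i <= j)%N -> (j <= s)%N ->
     beta j <= beta i /\ eta j <= eta i)
  (hnn : forall j : nat, (1 <= j)%N -> (j <= s)%N -> 0 <= beta j /\ 0 <= eta j)
  (hb0 : brand a0) (hr0 : remaining k pre a0) (hq0 : 0 < q a0).

Definition bv (v : R) (a : A) := if a == a0 then v / q a0 else b a.
Definition W v (al : {ffun 'I_s -> option A}) := welfare brand beta eta (bv v) q al.
Definition term v (o : option A) (i : nat) :=
  match o with Some a => bv v a * click_prob brand beta eta q a i | None => 0 end.
Definition cc (al : {ffun 'I_s -> option A}) :=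
  \sum_(i < s) (if al i == Some a0 then beta i.+1 else 0).

Lemma term_a0 v i : term v (Some a0) i = v * beta i.
Proof.
rewrite /term /bv /click_prob eqxx hb0; field.
by rewrite gt_eqF.
Qed.

Lemma term_x v x i : x != a0 -> brand x -> term v (Some x) i = b x * q x * beta i.
Proof. move=> /negPf xa bx; rewrite /term /bv /click_prob xa bx; ring. Qed.

Lemma term_aff v o i :
  term v o i = term 0 o i + v * (if o == Some a0 then beta i else 0).
Proof.
case: o => [a|]; last by rewrite /= mulr0 addr0.
case: (a =P a0) => [->|/eqP ne]; first by rewrite !term_a0 eqxx mul0r add0r.
rewrite /term /bv (negPf ne).
have -> : (Some a == Some a0) = false by apply/negP => /eqP [] /eqP; apply/negP.
by rewrite mulr0 addr0.
Qed.

Lemma W_aff v al : W v al = W 0 al + v * cc al.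
Proof.
rewrite /W /welfare /cc mulr_sumr -big_split /=; apply: eq_bigr => i _.
exact: (term_aff v (al i) i.+1).
Qed.

Lemma cc_one al (j : 'I_s) : valid_alloc al -> al j = Some a0 -> cc al = beta j.+1.
Proof.
move=> hv hj; rewrite /cc (bigD1 j) //= hj eqxx big1 ?addr0 // => i /negPf hij.
case: eqP => // e; by rewrite (hv _ _ _ e hj) eqxx in hij.
Qed.

Lemma cc_zero al : (forall j, al j <> Some a0) -> cc al = 0.
Proof. by move=> h; rewrite /cc big1 // => i _; case: eqP => // /h. Qed.

Definition kk : 'I_s := Ordinal hks.

Lemma beta_k_ge0 : 0 <= beta k.+1.
Proof. by case: (hnn (j := k.+1)). Qed.

Lemma cc_nonbrand al : valid_alloc al -> agrees k pre al -> nonbrand_at brand k al ->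
  cc al <= beta k.+1.
Proof.
move=> hv ha [i [ik [a [hia hna]]]].
case: (pickP (fun j => al j == Some a0)) => [j /eqP hj|none]; last first.
  by rewrite cc_zero ?beta_k_ge0 // => j /eqP; rewrite none.
rewrite (cc_one hv hj).
case: (ltngtP j k) => jk.
- by exfalso; apply: (hr0 jk); rewrite -ha.
- by case: (hmono (i := k.+1) (j := j.+1)) => //; rewrite ?ltn_ord // ltnW.
- have ij : i = j by apply: val_inj; rewrite /= ik jk.
  by move: hia; rewrite ij hj => -[e]; rewrite -e hb0 in hna.
Qed.

Lemma sum2 (F : 'I_s -> R) i j : i != j ->
  \sum_(l < s) F l = F i + F j + \sum_(l < s | (l != i) && (l != j)) F l.
Proof. by move=> ij; rewrite (bigD1 i) //= (bigD1 j) ?addrA // eq_sym. Qed.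

Definition D v := 0 <= v /\
  (forall a : A, remaining k pre a -> brand a -> a != a0 -> b a * q a <= v).

Lemma swap v al : D v -> valid_alloc al -> agrees k pre al -> brand_at brand k al ->
  exists al', [/\ valid_alloc al', agrees k pre al', al' kk = Some a0 &
                  W v al <= W v al'].
Proof.
move=> [v0 hD] hv ha [i [ik [x [hix bx]]]].
have ikk : i = kk by apply: val_inj.
subst i.
case: (x =P a0) => [xa|/eqP xa].
  by exists al; split => //; rewrite hix xa.
have rx : remaining k pre x.
  move=> i ik' e; have := ha i ik'; rewrite e => e'.
  have := hv _ _ _ e' hix => iK; by rewrite iK ltnn in ik'.
have bxv := hD x rx bx xa.
case: (pickP (fun j => al j == Some a0)) => [j /eqP hj|none].
- have jk : (k < j)%N.
    case: (ltngtP j k) => // jk.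
    + by exfalso; apply: (hr0 jk); rewrite -ha.
    + have ij : j = kk by apply: val_inj; rewrite /= jk.
      by move: hj; rewrite ij hix => -[] e; rewrite e eqxx in xa.
  have jkk : j != kk by apply/eqP => e; rewrite e ltnn in jk.
  pose f := fun i : 'I_s => if i == kk then j else if i == j then kk else i.
  have fK : forall i, f (f i) = i.
    by move=> i; rewrite /f; do !case: eqP => //; congruence.
  pose al' := [ffun i => al (f i)].
  exists al'; split.
  + move=> i1 i2 a; rewrite !ffunE => e1 e2.
    by rewrite -(fK i1) -(fK i2) (hv _ _ _ e1 e2).
  + move=> i ik'; rewrite ffunE /f.
    have -> : (i == kk) = false by apply/negP => /eqP e; rewrite e ltnn in ik'.
    have -> : (i == j) = false.
      apply/negP => /eqP e; have := ltn_trans ik' jk; by rewrite e ltnn.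
    exact: ha.
  + by rewrite ffunE /f eqxx.
  + have kj : kk != j by rewrite eq_sym.
    rewrite /W /welfare !(sum2 _ kj) /al' !ffunE /f eqxx (negPf jkk) eqxx.
    set r1 := (X in _ + _ + X <= _); set r2 := (X in _ <= _ + _ + X).
    have -> : r2 = r1.
      rewrite /r1 /r2; apply: eq_bigr => i /andP [i1 i2]; rewrite ffunE /f.
      by rewrite (negPf i1) (negPf i2).
    rewrite hix hj.
    change (term v (Some x) k.+1 + term v (Some a0) j.+1 + r1 <=
            term v (Some a0) k.+1 + term v (Some x) j.+1 + r1).
    rewrite !term_a0 !term_x //.
    have [hb _] : beta j.+1 <= beta k.+1 /\ eta j.+1 <= eta k.+1.
      by apply: hmono; [done | exact: ltnW | exact: ltn_ord].
    have h1 : 0 <= v - b x * q x by rewrite subr_ge0.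
    have h2 : 0 <= beta k.+1 - beta j.+1 by rewrite subr_ge0.
    have := mulr_ge0 h1 h2.
    move: (b x * q x) => y h; nra.
- have nj : forall j, al j <> Some a0 by move=> j /eqP; rewrite none.
  pose al' := [ffun i => if i == kk then Some a0 else al i].
  exists al'; split.
  + move=> i1 i2 a; rewrite !ffunE.
    case: (i1 =P kk) => [->|n1]; case: (i2 =P kk) => [->|n2] //.
    * by move=> <- /nj.
    * by move=> /[swap] <- /nj.
    * exact: hv.
  + move=> i ik'; rewrite ffunE.
    have -> : (i == kk) = false by apply/negP => /eqP e; rewrite e ltnn in ik'.
    exact: ha.
  + by rewrite ffunE eqxx.
  + rewrite /W /welfare (bigD1 kk) //= [X in _ <= X](bigD1 kk) //=.
    rewrite !ffunE eqxx.
    set r1 := (X in _ + X <= _); set r2 := (X in _ <= _ + X).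
    have -> : r2 = r1.
      rewrite /r1 /r2; apply: eq_bigr => i i1; rewrite ffunE.
      by rewrite (negPf i1).
    rewrite hix.
    change (term v (Some x) k.+1 + r1 <= term v (Some a0) k.+1 + r1).
    rewrite term_a0 term_x // lerD2r.
    by rewrite ler_wpM2r // beta_k_ge0.
Qed.

Definition Pb al := [/\ valid_alloc al, agrees k pre al & al kk = Some a0].
Definition Pn al := [/\ valid_alloc al, agrees k pre al & nonbrand_at brand k al].
Definition opt' v := exists al, al \in enum {ffun 'I_s -> option A} /\
  (Pb al /\ forall al', al' \in enum {ffun 'I_s -> option A} ->
                        (Pn al' -> W v al' <= W v al)).
Definition optv v := brand_optimal brand beta eta (bv v) q k pre.

Lemma opt_opt' v : D v -> optv v -> opt' v.
Proof.
move=> Dv [al [hv ha hbr hmax]].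
have [al' [hv' ha' hk' hle]] := swap Dv hv ha hbr.
exists al'; split; first by rewrite mem_enum.
split; first exact: (And3 hv' ha' hk').
move=> al'' _ [h1 h2 h3].
have h := hmax _ h1 h2 h3.
exact: le_trans h hle.
Qed.
Lemma opt'_opt v : opt' v -> optv v.
Proof.
move=> [al [_ [[hv ha hk] hmax]]].
exists al; split.
- exact: hv.
- exact: ha.
- by exists kk; split; [reflexivity | exists a0; split].
- move=> al' h1 h2 h3.
  have ein : al' \in enum {ffun 'I_s -> option A} by rewrite mem_enum.
  have h := hmax al' ein (And3 h1 h2 h3).
  exact: h.
Qed.

Lemma ray_opt' : ray opt'.
Proof.
apply: ray_ex => al; apply: ray_andP => -[hv ha hk].
apply: ray_all => al'; apply: ray_imp => -[h1 h2 h3].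
have hr := ray_lin (W 0 al') (W 0 al) (cc_nonbrand h1 h2 h3).
rewrite -(cc_one hv hk) in hr.
apply: (ray_ext _ hr) => v.
by rewrite (W_aff v al') (W_aff v al).
Qed.

Lemma final (hbq : forall a, 0 <= b a /\ 0 <= q a <= 1) :
  let P1 := forall v, D v -> ~ optv v in
  let P2 := forall v, D v -> optv v in
  let P3 := exists t : R, (exists v, D v /\ ~ optv v) /\
                          (forall v, D v -> (optv v <-> t <= v)) in
  [/\ P1 \/ P2 \/ P3, ~ (P1 /\ P2), ~ (P1 /\ P3) & ~ (P2 /\ P3)].
Proof.
move=> P1 P2 P3.
pose w := \sum_(a : A) b a * q a.
have bq0 : forall a, 0 <= b a * q a.
  by move=> a; case: (hbq a) => h1 /andP [h2 _]; apply: mulr_ge0.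
have hw : D w.
  split; first by apply: sumr_ge0 => a _.
  move=> a _ _ _; rewrite /w (bigD1 a) //= lerDl.
  by apply: sumr_ge0 => i _.
have Dup : forall v u, D v -> v <= u -> D u.
  move=> v u [v0 hv] vu; split; first exact: le_trans v0 vu.
  by move=> a r br na; apply: le_trans (hv a r br na) vu.
split.
- case: ray_opt' => [h|[h|[t h]]].
  + by left => v Dv /(opt_opt' Dv) /h.
  + by right; left => v Dv; apply: opt'_opt; apply: h.
  + case: (classic (exists v, D v /\ v < t)) => [[v [Dv vt]]|nex].
      right; right; exists t; split.
        exists v; split => // /(opt_opt' Dv) /h; by rewrite leNgt vt.
      move=> u Du; rewrite -h; split; [exact: opt_opt' | exact: opt'_opt].
    right; left => v Dv; apply: opt'_opt; apply/h.
    by rewrite leNgt; apply/negP => vt; apply: nex; exists v.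
- by move=> [h1 h2]; exact: h1 w hw (h2 w hw).
- move=> [h1 [t [_ h3]]].
  have Du : D (Order.max w t) by apply: Dup hw _; rewrite le_max lexx.
  by apply: (h1 _ Du); apply/(h3 _ Du); rewrite le_max lexx orbT.
- by move=> [h2 [t [[v [Dv nv]] _]]]; apply: nv; apply: h2.
Qed.

End Main.


Theorem theorem5 (R : realType) (A : finType) (s k : nat)
  (beta eta : nat -> R) (brand : pred A) (b q : A -> R)
  (pre : {ffun 'I_s -> option A}) (a0 : A) :
  (k < s)%N ->
  beta 1%N = 1 -> eta 1%N = 1 ->
  (forall i j : nat, (1 <= i)%N -> (i <= j)%N -> (j <= s)%N ->
     beta j <= beta i /\ eta j <= eta i) ->
  (forall j : nat, (1 <= j)%N -> (j <= s)%N -> 0 <= beta j /\ 0 <= eta j) ->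
  (forall a : A, 0 <= b a /\ 0 <= q a <= 1) ->
  valid_alloc pre ->
  (exists a : A, remaining k pre a /\ ~~ brand a) ->
  brand a0 -> remaining k pre a0 -> 0 < q a0 ->
  let D := fun v : R => 0 <= v /\
     (forall a : A, remaining k pre a -> brand a -> a != a0 -> b a * q a <= v) in
  let bv := fun (v : R) (a : A) => if a == a0 then v / q a0 else b a in
  let opt := fun v : R => brand_optimal brand beta eta (bv v) q k pre in
  let P1 := forall v, D v -> ~ opt v in
  let P2 := forall v, D v -> opt v in
  let P3 := exists t : R, (exists v, D v /\ ~ opt v) /\
                          (forall v, D v -> (opt v <-> t <= v)) in
  [/\ P1 \/ P2 \/ P3, ~ (P1 /\ P2), ~ (P1 /\ P3) & ~ (P2 /\ P3)].
Proof.
move=> hks _ _ hmono hnn hbq _ _ hb0 hr0 hq0.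
exact: (final hks hmono hnn hb0 hr0 hq0 hbq).
Qed.
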